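(* Let $P$ be a finite poset and $t\geq 2$, $n\geq 2$ integers. Suppose $\mathcal{F}\subseteq[t]^n$ is induced $P$-saturated and $i\in[n]$ is not separating for $\mathcal{F}$. Then $D_i(\mathcal{F})=\{D_i(f):f\in\mathcal{F}\}$ is an induced $P$-saturated family in $[t]^{n-1}$.
   Context: $[n]=\{1,\dots,n\}$; $[t]^n$ is the set of functions $f:[n]\to[t]$ ordered by $f\leq g$ iff $f(j)\leq g(j)$ for all $j$. An induced copy of $P$ in $\mathcal{F}\subseteq[t]^n$ is an injective map $\phi:P\to\mathcal{F}$ with $\phi(x)\leq\phi(y)$ iff $x\leq_P y$. $\mathcal{F}$ is induced $P$-saturated if it contains no induced copy of $P$ and for every $f\in[t]^n\setminus\mathcal{F}$, $\mathcal{F}\cup\{f\}$ contains an induced copy of $P$. For $f\in[t]^n$, $D_i(f)\in[t]^{n-1}$ is given by $D_i(f)(x)=f(x)$ for $x<i$ and $D_i(f)(x)=f(x+1)$ for $i\leq x\leq n-1$. Coordinate $i$ is separating for $\mathcal{F}$ if there exist distinct $f,f'\in\mathcal{F}$ with $D_i(f)\leq D_i(f')$ and $f(i)>f'(i)$. *)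

(* Defs.v *)
From mathcomp Require Import all_boot all_order.
Set Implicit Arguments. Unset Strict Implicit. Unset Printing Implicit Defensive.
Import Order.TTheory.

(* The grid [t]^n, encoded as functions 'I_n -> 'I_t (values 0..t-1,
   coordinates 0..n-1), ordered pointwise. *)
Definition grid (n t : nat) := {ffun 'I_n -> 'I_t}.

Definition gle (n t : nat) (f g : grid n t) : bool :=
  [forall j, (f j <= g j)%N].

Definition induced_copy (d : Order.disp_t) (P : finPOrderType d) (n t : nat)
    (F : {set grid n t}) (phi : P -> grid n t) : Prop :=
  injective phi /\ (forall x, phi x \in F) /\
  (forall x y : P, gle (phi x) (phi y) = (x <= y)%O).

Definition contains_induced (d : Order.disp_t) (P : finPOrderType d) (n t : nat)
    (F : {set grid n t}) : Prop :=
  exists phi : P -> grid n t, induced_copy F phi.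

Definition induced_saturated (d : Order.disp_t) (P : finPOrderType d) (n t : nat)
    (F : {set grid n t}) : Prop :=
  ~ contains_induced P F /\
  (forall f : grid n t, f \notin F -> contains_induced P (f |: F)).

Definition Del (m t : nat) (i : 'I_m.+1) (f : grid m.+1 t) : grid m t :=
  [ffun x => f (lift i x)].

Definition separating (m t : nat) (F : {set grid m.+1 t}) (i : 'I_m.+1) : Prop :=
  exists f f', [/\ f \in F, f' \in F, f != f',
                   gle (Del i f) (Del i f') & (f' i < f i)%N].

Definition Del_set (m t : nat) (i : 'I_m.+1) (F : {set grid m.+1 t}) :
  {set grid m t} := [set Del i f | f in F].

(* Main.v *)
Require Import Defs.
From mathcomp Require Import all_boot all_order.

Section Aux.
Variables (m t : nat).

Lemma gle_refl n (f : grid n t) : gle f f.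
Proof. by apply/forallP. Qed.

Lemma gle_trans n (f g h : grid n t) : gle f g -> gle g h -> gle f h.
Proof. move=> /forallP a /forallP b; apply/forallP=> j; exact: leq_trans (a j) (b j). Qed.

Lemma gle_anti n (f g : grid n t) : gle f g -> gle g f -> f = g.
Proof.
move=> /forallP a /forallP b; apply/ffunP=> j; apply/val_inj/anti_leq.
by rewrite a b.
Qed.

Lemma gle_split (i : 'I_m.+1) (f g : grid m.+1 t) :
  gle f g = gle (Del i f) (Del i g) && (f i <= g i)%N.
Proof.
apply/forallP/andP.
- move=> H; split; last exact: H. apply/forallP=> x; rewrite !ffunE; exact: H.
- case=> /forallP H Hi j. case: (unliftP i j) => [x ->|->] //.
  by have := H x; rewrite !ffunE.
Qed.

Definition Ext (i : 'I_m.+1) (g : grid m t) (v : 'I_t) : grid m.+1 t :=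
  [ffun j => if unlift i j is Some x then g x else v].

Lemma Del_Ext i g v : Del i (Ext i g v) = g.
Proof. by apply/ffunP=> x; rewrite !ffunE liftK. Qed.

Lemma Ext_i i g v : Ext i g v i = v.
Proof. by rewrite ffunE unlift_none. Qed.

Lemma emb (F : {set grid m.+1 t}) i : ~ separating F i ->
  forall f f', f \in F -> f' \in F -> gle f f' = gle (Del i f) (Del i f').
Proof.
move=> ns f f' fF f'F.
have [<-|ne] := eqVneq f f'; first by rewrite !gle_refl.
rewrite (gle_split i); case D: (gle _ _) => //=.
rewrite leqNgt; apply/negP=> lt; apply: ns; exists f, f'; split=> //.
Qed.

End Aux.

Theorem mainTheorem13 (d : Order.disp_t) (P : finPOrderType d) (t m : nat)
    (ht : (2 <= t)%N) (hn : (2 <= m.+1)%N)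
    (F : {set grid m.+1 t}) (i : 'I_m.+1) :
  induced_saturated P F -> ~ separating F i ->
  induced_saturated P (Del_set i F).
Proof.
case: t ht F => [|t'] // ht F [noP satF] ns.
have E := @emb _ _ F i ns.
split.
- case=> phi [inj [inF ord]].
  pose psi x := odflt [ffun _ => ord0] [pick f in F | Del i f == phi x].
  have psiP x : psi x \in F /\ Del i (psi x) = phi x.
    rewrite /psi; case: pickP => [f /andP[fF /eqP <-]|H] //=.
    have := inF x; case/imsetP=> f fF e.
    by have := H f; rewrite fF e eqxx.
  apply: noP; exists psi; split; last split.
  + move=> x y e; apply: inj; by rewrite -(psiP x).2 -(psiP y).2 e.
  + by move=> x; case: (psiP x).
  + move=> x y; rewrite E; first by rewrite (psiP x).2 (psiP y).2.
    * exact: (psiP x).1.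
    * exact: (psiP y).1.
- move=> g gF.
  pose vn := (\max_(h in F | gle (Del i h) g) (h i : nat))%N.
  have vlt : (vn < t'.+1)%N.
    by rewrite ltnS; apply/bigmax_leqP=> h _; rewrite -ltnS.
  pose v : 'I_t'.+1 := Ordinal vlt.
  pose f := @Ext _ _ i g v.
  have fnF : f \notin F.
    apply/negP=> fF; move: gF; rewrite /Del_set => /negP; apply; apply/imsetP; exists f => //.
    by rewrite Del_Ext.
  have [phi [inj [inF ord]]] := satF f fnF.
  have key : forall a b, a \in f |: F -> b \in f |: F ->
      gle a b = gle (Del i a) (Del i b).
    move=> a b; rewrite !in_setU1.
    case/orP=> [/eqP->|aF]; case/orP=> [/eqP->|bF].
    + by rewrite !gle_refl.
    + rewrite (@gle_split _ _ i) Del_Ext Ext_i; case D: (gle g _) => //=.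
      apply/bigmax_leqP=> h /andP[hF hg].
      have [->|ne] := eqVneq h b; first by [].
      have : gle h b by rewrite (E h b hF bF); exact: gle_trans hg D.
      by rewrite (@gle_split _ _ i) => /andP[].
    + rewrite (@gle_split _ _ i) Del_Ext Ext_i; case D: (gle _ g) => //=.
      rewrite /v /=; rewrite /vn; apply: (@leq_bigmax_cond _ (fun h => (h \in F) && gle (Del i h) g) (fun h => (h i : nat))); by rewrite aF D.
    + exact: E.
  exists (fun x => Del i (phi x)); split; last split.
  + move=> x y e; apply: inj; apply: gle_anti.
    * by rewrite key // e gle_refl.
    * by rewrite key // e gle_refl.
  + move=> x; have := inF x; rewrite !in_setU1; case/orP=> [/eqP->|xF].
    * by rewrite Del_Ext eqxx.
    * by apply/orP; right; rewrite /Del_set; apply/imsetP; exists (phi x).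
  + by move=> x y; rewrite -key.
Qed.
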